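(* Let $n\ge 3$, let ${\bf a}=(1)$, and let ${\bf b}=(\beta_1,\ldots,\beta_q)$, ${\bf c}=(\gamma_1,\ldots,\gamma_r)$ be sequences of positive integers with sums at most $n$, such that $2\le q\le r$. If $\mathcal T_{{\bf a},{\bf b},{\bf c}}$ has finitely many $G$-orbits, then ${\bf b}$ or ${\bf c}$ equals $(k,n-k)$ for some integer $k$.
   Context: $\mathbb F$ is an infinite field of characteristic $\ne 2$. Equip $\mathbb F^{2n}$ (canonical basis $e_1,\ldots,e_{2n}$) with the symmetric bilinear form $(e_i,e_j)=\delta_{i,2n+1-j}$, and let $G={\rm O}_{2n}(\mathbb F)$ be its isometry group. A subspace $V$ is isotropic if $(V,V)=\{0\}$. For a sequence ${\bf a}=(\alpha_1,\ldots,\alpha_p)$ of positive integers with $\sum\alpha_j\le n$, $M_{\bf a}$ is the set of flags $V_1\subset\cdots\subset V_p$ in $\mathbb F^{2n}$ with $\dim V_j=\alpha_1+\cdots+\alpha_j$ and $V_p$ isotropic. $\mathcal T_{{\bf a},{\bf b},{\bf c}}=M_{\bf a}\times M_{\bf b}\times M_{\bf c}$ with the diagonal $G$-action. *)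

(* Defs.v *)
From HB Require Import structures.
From mathcomp Require Import all_boot all_order all_algebra.
Set Implicit Arguments. Unset Strict Implicit. Unset Printing Implicit Defensive.
Import GRing.Theory.
Local Open Scope ring_scope.

(* Ambient space F^(2n) as row vectors 'rV[F]_(2*n); canonical basis
   e_1..e_(2n) correspond to delta indices 0..2n-1. *)
Section Defs.
Variables (F : fieldType) (n : nat).

Notation vecT := 'rV[F]_(2 * n).

(* Gram matrix of the form (e_i,e_j) = delta_{i,2n+1-j} (1-indexed),
   i.e. entry (i,j) (0-indexed) is 1 iff i + j = 2n - 1. *)
Definition Jmx : 'M[F]_(2 * n) :=
  \matrix_(i, j) (((i + j)%N == (2 * n).-1)%:R).

Definition form (u v : vecT) : F := (u *m Jmx *m v^T) 0 0.

Definition isotropic (V : {vspace vecT}) : Prop :=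
  forall u v, u \in V -> v \in V -> form u v = 0.

Definition in_O (g : 'M[F]_(2 * n)) : Prop := g *m Jmx *m g^T = Jmx.

Definition is_flag (a : seq nat) (s : seq {vspace vecT}) : Prop :=
  [/\ size s = size a,
      (forall j, (j < size s)%N -> \dim (nth 0%VS s j) = sumn (take j.+1 a)),
      (forall j, (j.+1 < size s)%N -> (nth 0%VS s j <= nth 0%VS s j.+1)%VS)
    & isotropic (last 0%VS s)].

Definition flag_act (g : 'M[F]_(2 * n)) (s : seq {vspace vecT}) :=
  map (fun V => (linfun (mulmxr g) @: V)%VS) s.

Definition triple := (seq {vspace vecT} * seq {vspace vecT} * seq {vspace vecT})%type.

Definition in_T (a b c : seq nat) (x : triple) : Prop :=
  [/\ is_flag a x.1.1, is_flag b x.1.2 & is_flag c x.2].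

Definition triple_act (g : 'M[F]_(2 * n)) (x : triple) : triple :=
  (flag_act g x.1.1, flag_act g x.1.2, flag_act g x.2).

Definition finitely_many_orbits (a b c : seq nat) : Prop :=
  exists reps : seq triple,
    forall x, in_T a b c x ->
      exists2 y, y \in reps & exists2 g, in_O g & triple_act g y = x.

End Defs.

(* Main.v *)
From Pilot Require Import Defs.
From mathcomp Require Import all_boot all_order all_algebra zify ring.
From Stdlib Require Import IndefiniteDescription.
Import Pilot.Defs.
Set Implicit Arguments. Unset Strict Implicit. Unset Printing Implicit Defensive.
Import GRing.Theory.
Local Open Scope ring_scope.

Lemma take_sub (T : eqType) k1 k2 (s : seq T) : (k1 <= k2)%N -> {subset take k1 s <= take k2 s}.
Proof.
move=> hk x hx; rewrite -(subnKC hk) takeD mem_cat hx //.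
Qed.

Definition pre3 (n s a b : nat) := (a :: iota 3 (s - 1)) ++ (b :: iota (s + 2) (n - s - 2)).
Definition ord3 (n s a b c : nat) := pre3 n s a b ++ [:: c].

Lemma size_pre3 n s a b : (1 <= s <= n - 2)%N -> size (pre3 n s a b) = n.-1.
Proof. move=> h; rewrite /pre3 size_cat /= !size_iota; lia. Qed.

Lemma mem_pre3 n s a b x : (1 <= s <= n - 2)%N -> x \in pre3 n s a b -> [|| x == a, x == b | (3 <= x < n)%N].
Proof.
move=> hs; rewrite /pre3 mem_cat !inE !mem_iota.
case/orP => [/orP [->//|/andP [h1 h2]]|/orP [->|/andP [h1 h2]]]; rewrite ?orbT //;
  apply/orP; right; apply/orP; right; apply/andP; split; lia.
Qed.

Lemma mem_ord3 n s a b c x : (1 <= s <= n - 2)%N -> x \in ord3 n s a b c -> [|| x == a, x == b, x == c | (3 <= x < n)%N].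
Proof.
move=> hs; rewrite /ord3 mem_cat => /orP [/(mem_pre3 hs)|]; last by rewrite inE => ->; rewrite !orbT.
by case/or3P => ->; rewrite ?orbT.
Qed.

Lemma uniq_catI (T : eqType) (l1 l2 : seq T) : uniq l1 -> uniq l2 ->
  (forall x, x \in l1 -> x \in l2 -> False) -> uniq (l1 ++ l2).
Proof.
move=> u1 u2 h; rewrite cat_uniq u1 u2 andbT /=; apply/hasPn => x x2; apply/negP => x1.
exact: h x1 x2.
Qed.

Lemma uniq_ord3 n s a b c : (1 <= s <= n - 2)%N -> a != b -> a != c -> b != c ->
  ~~ (3 <= a < n)%N -> ~~ (3 <= b < n)%N -> ~~ (3 <= c < n)%N -> uniq (ord3 n s a b c).
Proof.
move=> hs ab ac bc ha hb hc.
have -> : ord3 n s a b c = [:: a] ++ (iota 3 (s - 1) ++ ([:: b] ++ (iota (s + 2) (n - s - 2) ++ [:: c]))).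
  by rewrite /ord3 /pre3 -!catA.
apply: uniq_catI => //; last first.
  move=> x; rewrite !inE !mem_cat !inE !mem_iota; lia.
apply: uniq_catI; rewrite ?iota_uniq //; last first.
  move=> x; rewrite !mem_cat !inE !mem_iota; lia.
apply: uniq_catI => //; last first.
  move=> x; rewrite !mem_cat !inE !mem_iota; lia.
apply: uniq_catI; rewrite ?iota_uniq //.
move=> x; rewrite !inE !mem_iota; lia.
Qed.

Lemma take_ord3_a n s a b c k : (0 < k)%N -> a \in take k (ord3 n s a b c).
Proof. by case: k => // k _; rewrite /ord3 /pre3 /= inE eqxx. Qed.

Lemma take_ord3_lo n s a b c k x : (1 <= s <= n - 2)%N -> (k <= s)%N -> x \in take k (ord3 n s a b c) ->
  (x == a) || (3 <= x < n)%N.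
Proof.
move=> hs hk /(take_sub hk); rewrite /ord3 /pre3 -catA takel_cat /=; last by rewrite size_iota; lia.
rewrite take_oversize; last by rewrite /= size_iota; lia.
rewrite inE mem_iota => /orP [->//|h]; apply/orP; right; lia.
Qed.

Lemma take_ord3_b n s a b c k : (1 <= s <= n - 2)%N -> (s < k)%N -> b \in take k (ord3 n s a b c).
Proof.
move=> hs hk; rewrite /ord3 /pre3 -catA take_cat /= size_iota.
have -> : (k < (s - 1).+1)%N = false by lia.
have -> : (k - (s - 1).+1 = (k - s - 1).+1)%N by lia.
by rewrite /= inE mem_cat inE eqxx !orbT.
Qed.

Lemma take_ord3_c n s a b c k : (1 <= s <= n - 2)%N -> (k <= n - 1)%N -> c != a -> c != b ->
  ~~ (3 <= c < n)%N -> c \notin take k (ord3 n s a b c).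
Proof.
move=> hs hk ca cb cn; rewrite /ord3 takel_cat; last by rewrite size_pre3 //; lia.
apply/negP => /mem_take /(mem_pre3 hs); move: ca cb cn; lia.
Qed.

Lemma size_ord3 n s a b c : (1 <= s <= n - 2)%N -> size (ord3 n s a b c) = n.
Proof. move=> hs; rewrite /ord3 size_cat size_pre3 //=; lia. Qed.

Section Basics.
Variables (F : fieldType) (n : nat).
Hypothesis hn : (3 <= n)%N.

Lemma Npos : (0 < 2 * n)%N. Proof. lia. Qed.
Definition o (k : nat) : 'I_(2*n) := Ordinal (ltn_pmod k Npos).
Lemma oE k : (k < 2*n)%N -> val (o k) = k.
Proof. by move=> h; rewrite /= modn_small. Qed.
Definition d (k : nat) : 'rV[F]_(2*n) := delta_mx 0 (o k).

Lemma uJ (u : 'rV[F]_(2*n)) j : (u *m Jmx F n) 0 j = u 0 (rev_ord j).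
Proof.
rewrite mxE (bigD1 (rev_ord j)) //= big1 ?addr0.
  rewrite mxE /=.
  have -> : ((2 * n - j.+1 + j) == (2 * n).-1)%N by apply/eqP; have := ltn_ord j; lia.
  by rewrite mulr1.
move=> k hk; rewrite mxE.
have -> : ((k + j) == (2 * n).-1)%N = false.
  apply/negbTE/negP => /eqP h; move/eqP: hk; apply; apply: val_inj => /=.
  have := ltn_ord j; lia.
by rewrite mulr0.
Qed.

Lemma formS (u v : 'rV[F]_(2*n)) : form u v = \sum_j v 0 j * u 0 (rev_ord j).
Proof.
rewrite /form mxE; apply: eq_bigr => j _; rewrite uJ mxE mulrC //.
Qed.

Lemma form_iso (g : 'M[F]_(2*n)) u v : in_O g -> form (u *m g) (v *m g) = form u v.
Proof.
move=> hg; rewrite /form trmx_mul -!mulmxA.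
by rewrite [g *m (Jmx F n *m _)]mulmxA [g *m Jmx F n *m _]mulmxA hg.
Qed.

Lemma form_sym (u v : 'rV[F]_(2*n)) : form u v = form v u.
Proof.
rewrite !formS; rewrite (reindex_inj rev_ord_inj) /=.
apply: eq_bigr => j _; rewrite rev_ordK mulrC //.
Qed.

Lemma dE k j : (k < 2 * n)%N -> d k 0 j = ((val j == k)%N)%:R.
Proof. by move=> hk; rewrite /d mxE eqxx /= -val_eqE (oE hk). Qed.

Definition cspan (s : seq nat) : {vspace 'rV[F]_(2*n)} := <<[seq d k | k <- s]>>%VS.

Lemma cspan_coord s w : all (fun k => k < 2 * n)%N s -> w \in cspan s ->
  forall j : 'I_(2*n), (nat_of_ord j \notin s) -> w 0 j = 0.
Proof.
move=> hs hw j hj.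
have := @coord_span _ _ _ (in_tuple [seq d k | k <- s]) w hw.
move=> ->; rewrite summxE big1 // => i _.
rewrite mxE /= (nth_map 0%N); last by apply: leq_trans (ltn_ord i) _; rewrite size_map.
have hi : (i < size s)%N by apply: leq_trans (ltn_ord i) _; rewrite size_map.
have hin := mem_nth 0%N hi.
rewrite dE; last by move/allP: hs => /(_ _ hin).
case: eqP => [e|]; last by rewrite mulr0.
by move: hj; rewrite e hin.
Qed.

Lemma d_cspan s k : k \in s -> d k \in cspan s.
Proof. by move=> hk; apply: memv_span; apply: map_f. Qed.

Lemma dim_cspan s : all (fun k => k < 2 * n)%N s -> uniq s -> \dim (cspan s) = size s.
Proof.
move=> hs us.
have : free (in_tuple [seq d k | k <- s]).
  apply/freeP => c hc i.
  have hi : (i < size s)%N by apply: leq_trans (ltn_ord i) _; rewrite size_map.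
  have hin := mem_nth 0%N hi.
  have hlt : (nth 0%N s i < 2 * n)%N by move/allP: hs => /(_ _ hin).
  have := congr1 (fun M : 'rV[F]_(2*n) => M 0 (o (nth 0%N s i))) hc.
  rewrite summxE (bigD1 i) //= big1 ?addr0.
    by rewrite mxE mxE (nth_map 0%N) // dE // oE // eqxx mulr1.
  move=> i' hi'; rewrite mxE /= (nth_map 0%N); last by apply: leq_trans (ltn_ord i') _; rewrite size_map.
  have hi2 : (i' < size s)%N by apply: leq_trans (ltn_ord i') _; rewrite size_map.
  rewrite dE; last by move/allP: hs => /(_ _ (mem_nth 0%N hi2)).
  rewrite oE // nth_uniq //.
  case: eqP => [e|_]; last by rewrite mulr0.
  by move/eqP: hi'; case; apply: val_inj.
by move/eqP => h; rewrite /cspan -(size_map d s); exact: h.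
Qed.

Lemma cspan_iso s : all (fun k => k < 2 * n)%N s ->
  (forall k, k \in s -> (2 * n - k.+1)%N \notin s) -> isotropic (cspan s).
Proof.
move=> hs hiso u v hu hv; rewrite formS big1 // => j _.
case hj: (val j \in s).
  rewrite (cspan_coord hs hu) ?mulr0 //=.
  exact: hiso.
by rewrite (cspan_coord hs hv) ?mul0r ?hj.
Qed.

Lemma cspan_sub s1 s2 : {subset s1 <= s2} -> (cspan s1 <= cspan s2)%VS.
Proof. move=> h; apply: sub_span => x /mapP [k hk ->]; apply: map_f; exact: h. Qed.


Lemma sum_supp (S : seq 'I_(2*n)) (f : 'I_(2*n) -> F) : uniq S ->
  (forall j, j \notin S -> f j = 0) -> \sum_j f j = \sum_(j <- S) f j.
Proof.
move=> uS h; rewrite (big_uniq S uS) [X in _ = X]big_mkcond /=; apply: eq_bigr => j _.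
by case: ifP => // /negbT /h.
Qed.

Lemma rev_o k : (k < 2 * n)%N -> rev_ord (o k) = o (2 * n - k.+1).
Proof. move=> hk; apply: val_inj => /=; rewrite (modn_small hk) modn_small //; lia. Qed.

Lemma o_inj k1 k2 : (k1 < 2 * n)%N -> (k2 < 2 * n)%N -> (o k1 == o k2) = (k1 == k2).
Proof. by move=> h1 h2; rewrite -val_eqE !oE. Qed.

Lemma form_d (u : 'rV[F]_(2*n)) k : (k < 2 * n)%N -> form u (d k) = u 0 (o (2 * n - k.+1)).
Proof.
move=> hk; rewrite formS (sum_supp (S := [:: o k])) //.
  by rewrite big_cons big_nil addr0 dE // oE // eqxx mul1r rev_o.
by move=> j; rewrite inE dE // => hj; rewrite -(oE hk) val_eqE (negbTE hj) mul0r.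
Qed.

Definition lc (t : F) (k : nat) : F :=
  if k == 0%N then 1 else if k == 1%N then 1 else if k == 2%N then 1
  else if k == (2 * n - 3)%N then - (1 + t) else if k == (2 * n - 2)%N then 1
  else if k == (2 * n - 1)%N then t else 0.

Definition lvec (t : F) : 'rV[F]_(2*n) := \row_j lc t (nat_of_ord j).

Lemma lvecE t k : (k < 2 * n)%N -> lvec t 0 (o k) = lc t k.
Proof. by move=> hk; rewrite mxE oE. Qed.

Lemma lc0 t : lc t 0 = 1. Proof. by []. Qed.
Lemma lc1 t : lc t 1 = 1. Proof. by []. Qed.
Lemma lc2 t : lc t 2 = 1. Proof. by []. Qed.
Lemma lc3 t : lc t (2 * n - 3) = - (1 + t).
Proof. rewrite /lc; do 3 (rewrite ifN_eq; last lia). by rewrite eqxx. Qed.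
Lemma lc4 t : lc t (2 * n - 2) = 1.
Proof. rewrite /lc; do 4 (rewrite ifN_eq; last lia). by rewrite eqxx. Qed.
Lemma lc5 t : lc t (2 * n - 1) = t.
Proof. rewrite /lc; do 5 (rewrite ifN_eq; last lia). by rewrite eqxx. Qed.
Lemma lcz t k : (3 <= k)%N -> (k < 2 * n - 3)%N -> lc t k = 0.
Proof. move=> h1 h2; rewrite /lc; do 6 (rewrite ifN_eq; last lia). by []. Qed.


Definition Bsupp (w : 'rV[F]_(2*n)) := forall j : 'I_(2*n), (n <= j)%N -> w 0 j = 0.
Definition Csupp (w : 'rV[F]_(2*n)) := forall j : 'I_(2*n),
  ~~ [|| nat_of_ord j == (2 * n - 1)%N, nat_of_ord j == (2 * n - 2)%N, nat_of_ord j == (2 * n - 3)%N | (3 <= j < n)%N] ->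
  w 0 j = 0.

Lemma lvec_rev t (j : 'I_(2*n)) : lvec t 0 (rev_ord j) = lc t (2 * n - j.+1).
Proof. by rewrite mxE. Qed.

Lemma eq_o (j : 'I_(2*n)) k : (k < 2 * n)%N -> (j == o k) = (nat_of_ord j == k).
Proof. by move=> hk; rewrite -val_eqE oE. Qed.

Ltac solve_uniq := rewrite /= !inE !o_inj; lia.

Lemma form_lB t w : Bsupp w ->
  form (lvec t) w = t * w 0 (o 0) + w 0 (o 1) - (1 + t) * w 0 (o 2).
Proof.
move=> hw; rewrite formS (sum_supp (S := [:: o 0; o 1; o 2])).
- rewrite !big_cons big_nil !rev_o; try lia.
  rewrite !lvecE; try lia.
  rewrite lc5 lc4 lc3; ring.
- solve_uniq.
- move=> j; rewrite !inE !eq_o; try lia.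
  move=> hj; case: (leqP n j) => hjn; first by rewrite hw // mul0r.
  rewrite lvec_rev lcz ?mulr0 //; lia.
Qed.

Lemma form_lC t w : Csupp w ->
  form (lvec t) w = w 0 (o (2 * n - 1)) + w 0 (o (2 * n - 2)) + w 0 (o (2 * n - 3)).
Proof.
move=> hw; rewrite formS (sum_supp (S := [:: o (2 * n - 1); o (2 * n - 2); o (2 * n - 3)])).
- rewrite !big_cons big_nil !rev_o; try lia.
  have -> : (2 * n - (2 * n - 1).+1 = 0)%N by lia.
  have -> : (2 * n - (2 * n - 2).+1 = 1)%N by lia.
  have -> : (2 * n - (2 * n - 3).+1 = 2)%N by lia.
  rewrite !lvecE; try lia.
  rewrite lc0 lc1 lc2; ring.
- solve_uniq.
- move=> j; rewrite !inE !eq_o; try lia.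
  move=> hj; case h3: (3 <= j < n)%N.
    rewrite lvec_rev lcz ?mulr0 //; lia.
  rewrite hw ?mul0r //; lia.
Qed.

Lemma form_BC w w' : Bsupp w -> Csupp w' ->
  form w w' = w 0 (o 0) * w' 0 (o (2 * n - 1)) + w 0 (o 1) * w' 0 (o (2 * n - 2))
     + w 0 (o 2) * w' 0 (o (2 * n - 3)).
Proof.
move=> hw hw'; rewrite formS (sum_supp (S := [:: o (2 * n - 1); o (2 * n - 2); o (2 * n - 3)])).
- rewrite !big_cons big_nil !rev_o; try lia.
  have -> : (2 * n - (2 * n - 1).+1 = 0)%N by lia.
  have -> : (2 * n - (2 * n - 2).+1 = 1)%N by lia.
  have -> : (2 * n - (2 * n - 3).+1 = 2)%N by lia.
  ring.
- solve_uniq.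
- move=> j; rewrite !inE !eq_o; try lia.
  move=> hj; case h3: (3 <= j < n)%N.
    rewrite hw ?mulr0 //=; lia.
  rewrite hw' ?mul0r //; lia.
Qed.

Lemma form_ll t : form (lvec t) (lvec t) = 0.
Proof.
rewrite formS (sum_supp (S := [:: o 0; o 1; o 2; o (2 * n - 3); o (2 * n - 2); o (2 * n - 1)])).
- rewrite !big_cons big_nil !rev_o; try lia.
  have -> : (2 * n - (2 * n - 1).+1 = 0)%N by lia.
  have -> : (2 * n - (2 * n - 2).+1 = 1)%N by lia.
  have -> : (2 * n - (2 * n - 3).+1 = 2)%N by lia.
  rewrite !lvecE; try lia.
  rewrite lc0 lc1 lc2 lc3 lc4 lc5; ring.
- solve_uniq.
- move=> j; rewrite !inE !eq_o; try lia.
  move=> hj; rewrite mxE lcz ?mul0r //; have := ltn_ord j; lia.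
Qed.

Lemma lvec_neq0 t : lvec t != 0.
Proof.
apply/negP => /eqP h; have := congr1 (fun M : 'rV[F]_(2*n) => M 0 (o 0)) h.
rewrite lvecE ?lc0 ?mxE; [exact/eqP/oner_neq0 | lia].
Qed.



Lemma sumn_take_mono k1 k2 (b : seq nat) : (k1 <= k2)%N -> (sumn (take k1 b) <= sumn (take k2 b))%N.
Proof. by move=> hk; rewrite -(subnKC hk) takeD sumn_cat leq_addr. Qed.

Lemma sumn_take_le k (b : seq nat) : (sumn (take k b) <= sumn b)%N.
Proof. by rewrite -{2}(cat_take_drop k b) sumn_cat leq_addr. Qed.

Definition flagOf (b ord : seq nat) : seq {vspace 'rV[F]_(2*n)} :=
  [seq cspan (take (sumn (take j.+1 b)) ord) | j <- iota 0 (size b)].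

Lemma nth_flagOf b ord j : (j < size b)%N ->
  nth 0%VS (flagOf b ord) j = cspan (take (sumn (take j.+1 b)) ord).
Proof. by move=> hj; rewrite /flagOf (nth_map 0%N) ?size_iota // nth_iota. Qed.

Lemma iso0 : isotropic (0%VS : {vspace 'rV[F]_(2*n)}).
Proof.
move=> u v; rewrite memv0 => /eqP -> _; rewrite formS big1 // => j _.
by rewrite mxE mulr0.
Qed.

Lemma is_flag_of b ord : all (fun k => k < 2 * n)%N ord -> uniq ord -> (sumn b <= size ord)%N ->
  (forall k, k \in ord -> (2 * n - k.+1)%N \notin ord) -> is_flag b (flagOf b ord).
Proof.
move=> hall hu hsz hiso; split.
- by rewrite size_map size_iota.
- move=> j; rewrite size_map size_iota => hj; rewrite nth_flagOf // dim_cspan.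
  + rewrite size_takel //; apply: leq_trans hsz; exact: sumn_take_le.
  + by apply/allP => x /mem_take; move/allP: hall; apply.
  + exact: take_uniq.
- move=> j; rewrite size_map size_iota => hj; rewrite !nth_flagOf //; try lia.
  apply: cspan_sub; apply: take_sub; apply: sumn_take_mono; done.
- have := mem_last 0%VS (flagOf b ord); rewrite inE => /orP [/eqP ->|]; first exact: iso0.
  move=> /mapP [j _ ->]; apply: cspan_iso.
    by apply/allP => x /mem_take; move/allP: hall; apply.
  move=> k /mem_take hk; apply/negP => /mem_take; apply/negP; exact: hiso.
Qed.


Lemma row_entry m m' (A : 'M[F]_(m, m')) i j : row i A 0 j = A i j.
Proof. by rewrite mxE. Qed.

Lemma JJ : Jmx F n *m Jmx F n = 1%:M.
Proof.
apply/matrixP => i k.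
rewrite -row_entry row_mul uJ row_entry !mxE; congr (_%:R).
rewrite -val_eqE /=; have := ltn_ord k; have := ltn_ord i; lia.
Qed.

Lemma O_unit (g : 'M[F]_(2*n)) : in_O g -> g \in unitmx.
Proof.
move=> hg; have : g *m (Jmx F n *m g^T *m Jmx F n) = 1%:M.
  by rewrite !mulmxA hg JJ.
by case/mulmx1_unit.
Qed.

Lemma O_invmul (g g' : 'M[F]_(2*n)) : in_O g -> in_O g' -> in_O (invmx g *m g').
Proof.
move=> hg hg'; have ug := O_unit hg; rewrite /in_O.
have -> : invmx g *m g' *m Jmx F n *m (invmx g *m g')^T =
   invmx g *m (g' *m Jmx F n *m g'^T) *m (invmx g)^T by rewrite trmx_mul !mulmxA.
rewrite hg' -{1}hg !mulmxA mulVmx // mul1mx -mulmxA trmx_inv mulmxV ?unitmx_tr //.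
by rewrite mulmx1.
Qed.

Lemma lf_comp (A B : 'M[F]_(2*n)) :
  (linfun (mulmxr (B *m A)) : 'End('rV[F]_(2*n))) =
  ((linfun (mulmxr A) : 'End('rV[F]_(2*n))) \o (linfun (mulmxr B) : 'End('rV[F]_(2*n))))%VF.
Proof. by apply/lfunP => v; rewrite comp_lfunE !lfunE /= mulmxA. Qed.

Lemma flag_act_comp (A B : 'M[F]_(2*n)) s : flag_act A (flag_act B s) = flag_act (B *m A) s.
Proof. by rewrite /flag_act -map_comp; apply: eq_map => V /=; rewrite lf_comp limg_comp. Qed.

Lemma triple_act_comp (A B : 'M[F]_(2*n)) x : triple_act A (triple_act B x) = triple_act (B *m A) x.
Proof. by rewrite /triple_act /= !flag_act_comp. Qed.

Lemma flag_act1 s : flag_act (1%:M : 'M[F]_(2*n)) s = s.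
Proof.
rewrite /flag_act.
have -> : (linfun (mulmxr (1%:M : 'M[F]_(2*n))) : 'End('rV[F]_(2*n))) = \1%VF by apply/lfunP => v; rewrite id_lfunE lfunE /= mulmx1.
by rewrite (eq_map (fun V => lim1g V)) map_id.
Qed.

Lemma triple_act1 x : triple_act (1%:M : 'M[F]_(2*n)) x = x.
Proof. by case: x => [[x1 x2] x3]; rewrite /triple_act /= !flag_act1. Qed.


Lemma formZl a (u v : 'rV[F]_(2*n)) : form (a *: u) v = a * form u v.
Proof.
rewrite !formS mulr_sumr; apply: eq_bigr => j _; rewrite mxE; ring.
Qed.

Lemma alg_end (t t' mu al al' be be' : F) : mu * al' = 1 -> al * al' = 1 -> mu * be = 1 ->
  mu * be' = 1 -> be * be' = 1 -> t = mu * (t' * al) -> t = t'.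
Proof.
move=> h1 h2 h3 h4 h5 ->.
have ea : al = mu by rewrite -[al]mulr1 -h1 mulrCA h2 mulr1.
have em : mu * mu = 1 by rewrite -[mu * mu]mulr1 -h5 -[LHS]/(mu * mu * (be * be')) mulrACA h3 h4 mulr1.
by rewrite ea mulrCA em mulr1.
Qed.

Definition lf (g : 'M[F]_(2*n)) : 'End('rV[F]_(2*n)) := linfun (mulmxr g).

Lemma img_mem g (V : {vspace 'rV[F]_(2*n)}) v : (lf g @: V)%VS = V -> v \in V -> v *m g \in V.
Proof. by move=> e hv; rewrite -e; have := memv_img (lf g) hv; rewrite lfunE. Qed.

Lemma img_pre g (V : {vspace 'rV[F]_(2*n)}) w : (lf g @: V)%VS = V -> w \in V ->
  exists2 v, v \in V & w = v *m g.
Proof. by move=> e; rewrite -{1}e => /memv_imgP [v hv ->]; exists v => //; rewrite lfunE. Qed.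

Lemma core (g : 'M[F]_(2*n)) (B1 B2 C1 C2 : {vspace 'rV[F]_(2*n)}) t t' :
  d 0 \in B1 -> (forall w, w \in B1 -> [/\ Bsupp w, w 0 (o 1) = 0 & w 0 (o 2) = 0]) ->
  d 1 \in B2 -> (forall w, w \in B2 -> Bsupp w /\ w 0 (o 2) = 0) ->
  d (2 * n - 1) \in C1 ->
  (forall w, w \in C1 -> [/\ Csupp w, w 0 (o (2 * n - 2)) = 0 & w 0 (o (2 * n - 3)) = 0]) ->
  d (2 * n - 2) \in C2 -> (forall w, w \in C2 -> Csupp w /\ w 0 (o (2 * n - 3)) = 0) ->
  in_O g -> (lf g @: B1)%VS = B1 -> (lf g @: B2)%VS = B2 ->
  (lf g @: C1)%VS = C1 -> (lf g @: C2)%VS = C2 ->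
  (lf g @: <[lvec t]>)%VS = <[lvec t']>%VS -> t = t'.
Proof.
move=> hB1 sB1 hB2 sB2 hC1 sC1 hC2 sC2 hg gB1 gB2 gC1 gC2 gL.
have n1 : (2 * n - 1 < 2 * n)%N by lia.
have n2 : (2 * n - 2 < 2 * n)%N by lia.
have n3 : (2 * n - 3 < 2 * n)%N by lia.
have z0 : (0 < 2 * n)%N by lia.
have z1 : (1 < 2 * n)%N by lia.
have e1 : (2 * n - (2 * n - 1).+1 = 0)%N by lia.
have e2 : (2 * n - (2 * n - 2).+1 = 1)%N by lia.
have [Be0 e0_1 e0_2] := sB1 _ (img_mem gB1 hB1).
have [Ce' e'_2 e'_3] := sC1 _ (img_mem gC1 hC1).
have [Be1 e1_2] := sB2 _ (img_mem gB2 hB2).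
have [Ce'' e''_3] := sC2 _ (img_mem gC2 hC2).
set al := (d 0 *m g) 0 (o 0).
set al' := (d (2 * n - 1) *m g) 0 (o (2 * n - 1)).
set be := (d 1 *m g) 0 (o 1).
set be' := (d (2 * n - 2) *m g) 0 (o (2 * n - 2)).
have e1_0 : (d 1 *m g) 0 (o 0) = 0.
  have [c hc ec] := img_pre gC1 hC1.
  have := form_d (d 1 *m g) n1; rewrite e1 => <-.
  rewrite ec form_iso // form_sym form_d //.
  by have [] := sC1 _ hc.
have e''_1 : (d (2 * n - 2) *m g) 0 (o (2 * n - 1)) = 0.
  have [c hc ec] := img_pre gB1 hB1.
  have := form_d (d (2 * n - 2) *m g) z0 => <-.
  rewrite ec form_iso // form_sym form_d // e2.
  by have [] := sB1 _ hc.
have h2 : al * al' = 1.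
  have := form_iso (d 0) (d (2 * n - 1)) hg.
  by rewrite form_BC // e'_2 e'_3 e0_1 !mul0r !mulr0 !addr0 form_d // e1 dE // oE // eqxx.
have h5 : be * be' = 1.
  have := form_iso (d 1) (d (2 * n - 2)) hg.
  by rewrite form_BC // e1_0 e1_2 e''_3 ?mul0r ?mulr0 ?add0r ?addr0 form_d // e2 dE // oE // eqxx.
have [mu hmu] : exists mu, lvec t *m g = mu *: lvec t'.
  apply/vlineP; rewrite -gL; have := memv_img (lf g) (memv_line (lvec t)); rewrite lfunE //.
have key : forall w, form (lvec t) w = mu * form (lvec t') (w *m g).
  by move=> w; rewrite -formZl -hmu form_iso.
have h6 := key (d 0).
rewrite form_d // lvecE // lc5 form_lB // -/al e0_1 e0_2 ?mulr0 ?subr0 ?addr0 in h6.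
have h1 := key (d (2 * n - 1)).
rewrite form_d // e1 lvecE // lc0 form_lC // -/al' e'_2 e'_3 ?addr0 in h1.
have h3 := key (d 1).
rewrite form_d // lvecE // lc4 form_lB // -/be e1_0 e1_2 ?mulr0 ?subr0 ?addr0 ?add0r in h3.
have h4 := key (d (2 * n - 2)).
rewrite form_d // e2 lvecE // lc1 form_lC // -/be' e''_1 e''_3 ?add0r ?addr0 in h4.
apply: (alg_end (mu := mu) (al := al) (al' := al') (be := be) (be' := be')) => //.
Qed.


Definition ordB (s : nat) := ord3 n s 0 1 2.
Definition ordC (u : nat) := ord3 n u (2 * n - 1) (2 * n - 2) (2 * n - 3).

Lemma ordB_all s : (1 <= s <= n - 2)%N -> forall x, x \in ordB s -> (x < n)%N.
Proof. move=> hs x /(mem_ord3 hs); lia. Qed.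

Lemma ordC_mem u : (1 <= u <= n - 2)%N -> forall x, x \in ordC u ->
  [|| x == (2 * n - 1)%N, x == (2 * n - 2)%N, x == (2 * n - 3)%N | (3 <= x < n)%N].
Proof. by move=> hs x /(mem_ord3 hs). Qed.

Lemma ordB_flag b : (1 <= head 0%N b <= n - 2)%N -> (sumn b <= n)%N -> is_flag b (flagOf b (ordB (head 0%N b))).
Proof.
move=> hs hb; have hall := ordB_all hs; apply: is_flag_of.
- apply/allP => x /hall; lia.
- apply: uniq_ord3; lia.
- by rewrite size_ord3.
- move=> k hk; apply/negP => /hall; have := hall _ hk; lia.
Qed.

Lemma ordC_flag c : (1 <= head 0%N c <= n - 2)%N -> (sumn c <= n)%N -> is_flag c (flagOf c (ordC (head 0%N c))).
Proof.
move=> hs hb; have hall := ordC_mem hs; apply: is_flag_of.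
- apply/allP => x /hall; lia.
- apply: uniq_ord3; lia.
- by rewrite size_ord3.
- move=> k hk; apply/negP => /hall; have := hall _ hk; lia.
Qed.

Lemma line_flag t : is_flag [:: 1%N] [:: <[lvec t]>%VS].
Proof.
split => //.
- by case=> // _; rewrite /= dim_vline lvec_neq0.
- case=> //.
- move=> u v /vlineP [a ->] /vlineP [b' ->].
  by rewrite formZl form_sym formZl form_ll !mulr0.
Qed.

Definition XT (b c : seq nat) (t : F) : triple F n :=
  ([:: <[lvec t]>%VS], flagOf b (ordB (head 0%N b)), flagOf c (ordC (head 0%N c))).

Lemma flag_nth g b ord j : flag_act g (flagOf b ord) = flagOf b ord -> (j < size b)%N ->
  (lf g @: nth 0%VS (flagOf b ord) j)%VS = nth 0%VS (flagOf b ord) j.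
Proof.
move=> h hj; have := congr1 (fun s => nth 0%VS s j) h.
rewrite /flag_act (nth_map 0%VS) //; by rewrite size_map size_iota.
Qed.


Lemma allB s k : (1 <= s <= n - 2)%N -> all (fun x => x < 2 * n)%N (take k (ordB s)).
Proof. move=> hs; apply/allP => x /mem_take /(ordB_all hs); lia. Qed.

Lemma allC s k : (1 <= s <= n - 2)%N -> all (fun x => x < 2 * n)%N (take k (ordC s)).
Proof. move=> hs; apply/allP => x /mem_take /(ordC_mem hs); lia. Qed.

Lemma B1_facts s : (1 <= s <= n - 2)%N ->
  d 0 \in cspan (take s (ordB s)) /\
  (forall w, w \in cspan (take s (ordB s)) -> [/\ Bsupp w, w 0 (o 1) = 0 & w 0 (o 2) = 0]).
Proof.
move=> hs; split; first by apply: d_cspan; apply: take_ord3_a; lia.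
move=> w hw; have hc := cspan_coord (allB s hs) hw; split.
- move=> j hj; apply: hc; apply/negP => /(take_ord3_lo hs (leqnn s)); lia.
- apply: hc; rewrite oE; last lia; apply/negP => /(take_ord3_lo hs (leqnn s)); lia.
- apply: hc; rewrite oE; last lia; apply/negP => /(take_ord3_lo hs (leqnn s)); lia.
Qed.

Lemma B2_facts s k : (1 <= s <= n - 2)%N -> (s < k <= n - 1)%N ->
  d 1 \in cspan (take k (ordB s)) /\
  (forall w, w \in cspan (take k (ordB s)) -> Bsupp w /\ w 0 (o 2) = 0).
Proof.
move=> hs hk; split; first by apply: d_cspan; apply: take_ord3_b; lia.
move=> w hw; have hc := cspan_coord (allB k hs) hw; split.
- move=> j hj; apply: hc; apply/negP => /mem_take /(ordB_all hs); lia.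
- apply: hc; rewrite oE; last lia; apply: take_ord3_c => //; lia.
Qed.

Lemma C1_facts s : (1 <= s <= n - 2)%N ->
  d (2 * n - 1) \in cspan (take s (ordC s)) /\
  (forall w, w \in cspan (take s (ordC s)) ->
     [/\ Csupp w, w 0 (o (2 * n - 2)) = 0 & w 0 (o (2 * n - 3)) = 0]).
Proof.
move=> hs; split; first by apply: d_cspan; apply: take_ord3_a; lia.
move=> w hw; have hc := cspan_coord (allC s hs) hw; split.
- move=> j hj; apply: hc; apply/negP => /mem_take /(ordC_mem hs); move: hj; lia.
- apply: hc; rewrite oE; last lia; apply/negP => /(take_ord3_lo hs (leqnn s)); lia.
- apply: hc; rewrite oE; last lia; apply/negP => /(take_ord3_lo hs (leqnn s)); lia.
Qed.

Lemma C2_facts s k : (1 <= s <= n - 2)%N -> (s < k <= n - 1)%N ->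
  d (2 * n - 2) \in cspan (take k (ordC s)) /\
  (forall w, w \in cspan (take k (ordC s)) -> Csupp w /\ w 0 (o (2 * n - 3)) = 0).
Proof.
move=> hs hk; split; first by apply: d_cspan; apply: take_ord3_b; lia.
move=> w hw; have hc := cspan_coord (allC k hs) hw; split.
- move=> j hj; apply: hc; apply/negP => /mem_take /(ordC_mem hs); move: hj; lia.
- apply: hc; rewrite oE; last lia; apply: take_ord3_c => //; lia.
Qed.

Lemma sep b1 b2 b' c1 c2 c' t t' g :
  (0 < b1)%N -> (0 < b2)%N -> (b1 + b2 <= n - 1)%N ->
  (0 < c1)%N -> (0 < c2)%N -> (c1 + c2 <= n - 1)%N -> in_O g ->
  triple_act g (XT (b1 :: b2 :: b') (c1 :: c2 :: c') t) = XT (b1 :: b2 :: b') (c1 :: c2 :: c') t' ->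
  t = t'.
Proof.
move=> hb1 hb2 hb hc1 hc2 hc hg heq.
have hB : flag_act g (flagOf (b1 :: b2 :: b') (ordB b1)) = flagOf (b1 :: b2 :: b') (ordB b1)
  := congr1 (fun x => x.1.2) heq.
have hC : flag_act g (flagOf (c1 :: c2 :: c') (ordC c1)) = flagOf (c1 :: c2 :: c') (ordC c1)
  := congr1 (fun x => x.2) heq.
have hL : flag_act g [:: <[lvec t]>%VS] = [:: <[lvec t']>%VS] := congr1 (fun x => x.1.1) heq.
have hsb : (1 <= b1 <= n - 2)%N by lia.
have hsc : (1 <= c1 <= n - 2)%N by lia.
have gB1 := flag_nth (j := 0) hB isT; rewrite nth_flagOf //= ?take0 /= ?addn0 in gB1.
have gB2 := flag_nth (j := 1) hB isT; rewrite nth_flagOf //= ?take0 /= ?addn0 in gB2.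
have gC1 := flag_nth (j := 0) hC isT; rewrite nth_flagOf //= ?take0 /= ?addn0 in gC1.
have gC2 := flag_nth (j := 1) hC isT; rewrite nth_flagOf //= ?take0 /= ?addn0 in gC2.
have [hB1 sB1] := B1_facts hsb.
have [hB2 sB2] := @B2_facts b1 (b1 + b2) hsb ltac:(lia).
have [hC1 sC1] := C1_facts hsc.
have [hC2 sC2] := @C2_facts c1 (c1 + c2) hsc ltac:(lia).
by apply: (core hB1 sB1 hB2 sB2 hC1 sC1 hC2 sC2 hg gB1 gB2 gC1 gC2); move: hL => /= [].
Qed.


Lemma uniq_seq_ex (hinf : forall s : seq F, exists x, x \notin s) k :
  exists s : seq F, uniq s /\ size s = k.
Proof.
elim: k => [|k [s [us ss]]]; first by exists [::].
have [x hx] := hinf s; exists (x :: s); by rewrite /= hx us ss.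
Qed.

Lemma not_fin (hinf : forall s : seq F, exists x, x \notin s) b1 b2 b' c1 c2 c' :
  (0 < b1)%N -> (0 < b2)%N -> (b1 + b2 <= n - 1)%N ->
  (0 < c1)%N -> (0 < c2)%N -> (c1 + c2 <= n - 1)%N ->
  (sumn (b1 :: b2 :: b') <= n)%N -> (sumn (c1 :: c2 :: c') <= n)%N ->
  ~ finitely_many_orbits F n [:: 1%N] (b1 :: b2 :: b') (c1 :: c2 :: c').
Proof.
move=> hb1 hb2 hb hc1 hc2 hc sb sc [reps H].
set b := b1 :: b2 :: b'; set c := c1 :: c2 :: c'.
have hT : forall t, in_T [:: 1%N] b c (XT b c t).
  move=> t; split; first exact: line_flag.
    apply: ordB_flag => //=; lia.
  apply: ordC_flag => //=; lia.
have ex : forall t, exists y, y \in reps /\ exists2 g, in_O g & triple_act g y = XT b c t.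
  by move=> t; have [y hy hg] := H _ (hT t); exists y.
pose f t := proj1_sig (constructive_indefinite_description _ (ex t)).
have hf : forall t, f t \in reps /\ exists2 g, in_O g & triple_act g (f t) = XT b c t.
  by move=> t; rewrite /f; case: constructive_indefinite_description.
have finj : injective f.
  move=> t t' e.
  have [_ [g hg eg]] := hf t; have [_ [g' hg' eg']] := hf t'.
  rewrite e in eg.
  apply: (@sep b1 b2 b' c1 c2 c' t t' (invmx g *m g')) => //.
    exact: O_invmul.
  by rewrite -eg triple_act_comp mulmxA mulmxV ?O_unit // mul1mx.
have [ts [uts sts]] := uniq_seq_ex hinf (size reps).+1.
have : (size (map f ts) <= size reps)%N.
  apply: uniq_leq_size; first by rewrite map_inj_uniq.
  by move=> y /mapP [t _ ->]; case: (hf t).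
by rewrite size_map sts ltnn.
Qed.

End Basics.

Theorem proposition1p4 (F : fieldType) (n : nat) (b c : seq nat) :
  (forall s : seq F, exists x, x \notin s) ->
  (2%:R : F) != 0 ->
  (3 <= n)%N ->
  all (fun x => 0 < x)%N b -> all (fun x => 0 < x)%N c ->
  (sumn b <= n)%N -> (sumn c <= n)%N ->
  (2 <= size b)%N -> (size b <= size c)%N ->
  finitely_many_orbits F n [:: 1%N] b c ->
  (exists k : nat, b = [:: k; (n - k)%N]) \/ (exists k : nat, c = [:: k; (n - k)%N]).
Proof.
move=> hinf _ hn pb pc sb sc hsb hbc hfin.
case: b pb sb hsb hbc hfin => [|b1 [|b2 b']] //= pb sb _ hbc hfin.
case: c pc sc hbc hfin => [|c1 [|c2 c']] //= pc sc _ hfin.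
move/and3P: pb => [pb1 pb2 pb'].
move/and3P: pc => [pc1 pc2 pc'].
have caseb : (exists k, [:: b1, b2 & b'] = [:: k; (n - k)%N]) \/ (b1 + b2 <= n - 1)%N.
  case: b' pb' sb {hfin} => [|x b''] /=.
    move=> _ sb; case: (eqVneq (b1 + b2)%N n) => e.
      by left; exists b1; congr (_ :: _ :: _); lia.
    right; lia.
  move=> /andP [px _] sb; right; lia.
have casec : (exists k, [:: c1, c2 & c'] = [:: k; (n - k)%N]) \/ (c1 + c2 <= n - 1)%N.
  case: c' pc' sc {hfin} => [|x c''] /=.
    move=> _ sc; case: (eqVneq (c1 + c2)%N n) => e.
      by left; exists c1; congr (_ :: _ :: _); lia.
    right; lia.
  move=> /andP [px _] sc; right; lia.
case: caseb => [hb|hb]; first by left.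
case: casec => [hc|hc]; first by right.
exfalso; exact: (not_fin hn hinf pb1 pb2 hb pc1 pc2 hc sb sc hfin).
Qed.
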